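(* Let $\langle V, Q\rangle$ be a Federated Byzantine Agreement System with quorum slice cardinality map $C$. If $C(v) > |V|/2$ for every $v \in V$, then $\langle V, Q\rangle$ enjoys quorum intersection, i.e. any two quorums $U_1, U_2$ satisfy $U_1\cap U_2\neq\varnothing$.
   Context: An FBAS is a pair $\langle V, Q\rangle$ where $V$ is a finite set of nodes and $Q : V \to 2^{2^V}\setminus\{\varnothing\}$ assigns to each node a nonempty collection of subsets of $V$ (its quorum slices), such that for all $v\in V$ and all $q\in Q(v)$, $v \in q$. A set $U \subseteq V$ is a quorum iff $U\neq\varnothing$ and for every $u\in U$ there exists $q \in Q(u)$ with $q\subseteq U$. The FBAS enjoys quorum intersection iff every two quorums share a node. The quorum slice cardinality map is $C(v)=\min\{|q| : q\in Q(v)\}$. *)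

(* Defs.v *)
From mathcomp Require Import all_boot.
Set Implicit Arguments. Unset Strict Implicit. Unset Printing Implicit Defensive.

Definition is_FBAS (V : finType) (Q : V -> {set {set V}}) : Prop :=
  forall v : V, Q v != set0 /\ (forall q, q \in Q v -> v \in q).

Definition is_quorum (V : finType) (Q : V -> {set {set V}}) (U : {set V}) : Prop :=
  U != set0 /\ forall u, u \in U -> exists2 q, q \in Q u & q \subset U.

Definition quorum_intersection (V : finType) (Q : V -> {set {set V}}) : Prop :=
  forall U1 U2 : {set V}, is_quorum Q U1 -> is_quorum Q U2 -> U1 :&: U2 != set0.

(* Quorum slice cardinality map C(v) = min { |q| : q in Q(v) }.
   The seed #|V| is an upper bound of every |q|, so for nonempty Q v
   this is exactly the minimum. *)
Definition slice_card (V : finType) (Q : V -> {set {set V}}) (v : V) : nat :=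
  \big[minn/#|V|]_(q in Q v) #|q|.

(* Main.v *)
Require Import Defs.
From mathcomp Require Import all_boot.
From mathcomp Require Import zify.

Lemma sc_le (V : finType) (Q : V -> {set {set V}}) v q :
  q \in Q v -> slice_card Q v <= #|q|.
Proof.
move=> Hq; rewrite /slice_card -big_filter.
have : q \in [seq i <- index_enum _ | i \in Q v] by rewrite mem_filter Hq mem_index_enum.
elim: [seq _ <- _ | _] => [//|a s IH]; rewrite inE big_cons => /orP [/eqP <-|/IH].
  exact: geq_minl.
move=> H; exact: leq_trans (geq_minr _ _) H.
Qed.

(* C(v) > |V|/2 is written as |V| < 2 * C(v) (exact over the rationals). *)
Theorem mainTheorem2 (V : finType) (Q : V -> {set {set V}}) :
  is_FBAS Q ->
  (forall v : V, #|V| < 2 * slice_card Q v) ->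
  quorum_intersection Q.
Proof.
move=> _ HC U1 U2 [n1 H1] [n2 H2].
case/set0Pn: n1 => u1 /H1 [q1 Hq1 S1].
case/set0Pn: n2 => u2 /H2 [q2 Hq2 S2].
apply/negP => /eqP E.
have I0 : q1 :&: q2 = set0.
  by apply/eqP; rewrite -subset0 -E setISS.
have := cardsU q1 q2; rewrite I0 cards0 subn0 => HU.
have := max_card (q1 :|: q2); rewrite HU.
have := HC u1; have := HC u2.
have := @sc_le V Q u1 q1 Hq1; have := @sc_le V Q u2 q2 Hq2.
lia.
Qed.
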